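(* Let $q\equiv0\pmod3$, $q\ge9$. The group $G_q$ acts transitively on the points of the axis $\Gamma_{\mathrm{A}}$ of $\Gamma$, i.e. of the line $x_0=x_3=0$.
   Context: $\mathrm{PG}(3,q)$ has points $P(x_0,x_1,x_2,x_3)$. The twisted cubic is $\mathcal{C}=\{P(t^3,t^2,t,1):t\in\mathbb{F}_q\}\cup\{P(1,0,0,0)\}$ and $G_q$ is the group of projectivities of $\mathrm{PG}(3,q)$ mapping $\mathcal{C}$ to itself. For $q\equiv0\pmod3$ the osculating planes $x_0-t^3x_3=0$ ($t\in\mathbb{F}_q$) and $x_3=0$ all contain the line $\Gamma_{\mathrm{A}}$: $x_0=x_3=0$, called the axis of $\Gamma$; it is fixed by $G_q$. *)

(* Defs.v *)
From HB Require Import structures.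
From mathcomp Require Import all_boot all_order all_algebra.
Set Implicit Arguments. Unset Strict Implicit. Unset Printing Implicit Defensive.
Import GRing.Theory.
Local Open Scope ring_scope.

(* PG(3,q) over a finite field F: a point P(x0,x1,x2,x3) is represented by a
   nonzero row vector x : 'rV[F]_4 with x 0 i = x_i, up to nonzero scalars. *)

Definition coord4 (F : fieldType) (a b c d : F) : 'rV[F]_4 :=
  \row_(i < 4) [:: a; b; c; d]`_i.

Definition same_point (F : fieldType) (u v : 'rV[F]_4) : Prop :=
  exists c : F, c != 0 /\ u = c *: v.

Definition on_twisted_cubic (F : fieldType) (v : 'rV[F]_4) : Prop :=
  (exists t : F, same_point v (coord4 (t ^+ 3) (t ^+ 2) t 1))
  \/ same_point v (coord4 1 0 0 0).

Definition on_axis (F : fieldType) (v : 'rV[F]_4) : Prop :=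
  v != 0 /\ v 0 0 = 0 /\ v 0 3 = 0.

Definition in_Gq (F : fieldType) (M : 'M[F]_4) : Prop :=
  M \in unitmx /\
  forall v : 'rV[F]_4, v != 0 ->
    (on_twisted_cubic v <-> on_twisted_cubic (v *m M)).

(* Main.v *)
Require Import Defs.
From HB Require Import structures.
From mathcomp Require Import all_boot all_order all_algebra finfield.
From mathcomp Require Import ring.
Import GRing.Theory.
Local Open Scope ring_scope.

Section S.
Variable F : fieldType.

Definition mk4 (r0 r1 r2 r3 : seq F) : 'M[F]_4 :=
  \matrix_(i < 4, j < 4) (nth [::] [:: r0; r1; r2; r3] i)`_j.

Definition pt (t : F) := coord4 (t ^+ 3) (t ^+ 2) t 1.
Definition e0 := coord4 (1 : F) 0 0 0.

Lemma rowE4 (v : 'rV[F]_4) : v = coord4 (v 0 0) (v 0 1) (v 0 2) (v 0 3).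
Proof.
apply/rowP => j; rewrite !mxE; case: j => [[|[|[|[|j]]]] Hj] //=;
  by congr (v _ _); apply/val_inj.
Qed.

Lemma mul4 a b c d (M : 'M[F]_4) :
  coord4 a b c d *m M = coord4
    (a * M 0 0 + b * M 1 0 + c * M 2 0 + d * M 3 0)
    (a * M 0 1 + b * M 1 1 + c * M 2 1 + d * M 3 1)
    (a * M 0 2 + b * M 1 2 + c * M 2 2 + d * M 3 2)
    (a * M 0 3 + b * M 1 3 + c * M 2 3 + d * M 3 3).
Proof.
apply/rowP => j; rewrite !mxE !big_ord_recl big_ord0 !mxE.
case: j => [[|[|[|[|j]]]] Hj] //=; rewrite addr0 !addrA; do 3? congr (_ + _);
  by congr (_ * M _ _); apply/val_inj.
Qed.

Definition D (l : F) := mk4 [:: l ^+ 3; 0; 0; 0] [:: 0; l ^+ 2; 0; 0] [:: 0; 0; l; 0] [:: 0; 0; 0; 1].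
Definition Sw := mk4 [:: 0; 0; 0; 1] [:: 0; 0; 1; 0] [:: 0; 1; 0; 0] [:: 1; 0; 0; 0].
Definition T (c : F) := mk4 [:: 1; 0; 0; 0] [:: 3 * c; 1; 0; 0] [:: 3 * c ^+ 2; 2 * c; 1; 0] [:: c ^+ 3; c ^+ 2; c; 1].

Lemma DD l : l != 0 -> D l *m D l^-1 = 1%:M.
Proof.
move=> hl; apply/matrixP=> i j; rewrite !mxE !big_ord_recl big_ord0 !mxE.
case: i => [[|[|[|[|i]]]] Hi] //; case: j => [[|[|[|[|j]]]] Hj] //=.
all: try field; auto.
Qed.

Lemma SS : Sw *m Sw = 1%:M.
Proof. apply/matrixP=> i j; rewrite !mxE !big_ord_recl big_ord0 !mxE;
  case: i => [[|[|[|[|i]]]] Hi] //; case: j => [[|[|[|[|j]]]] Hj] //=; ring. Qed.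

Lemma TT c : T c *m T (- c) = 1%:M.
Proof. apply/matrixP=> i j; rewrite !mxE !big_ord_recl big_ord0 !mxE;
  case: i => [[|[|[|[|i]]]] Hi] //; case: j => [[|[|[|[|j]]]] Hj] //=; ring. Qed.


Lemma sp_scale c (w : 'rV[F]_4) : c != 0 -> on_twisted_cubic w -> on_twisted_cubic (c *: w).
Proof.
move=> hc [[t [d [hd ->]]]|[d [hd ->]]]; [left; exists t|right];
  exists (c * d); rewrite scalerA mulf_neq0 //.
Qed.

Definition fwd (M : 'M[F]_4) := forall v : 'rV[F]_4, on_twisted_cubic v -> on_twisted_cubic (v *m M).

Lemma fwdP M : (forall t, on_twisted_cubic (pt t *m M)) -> on_twisted_cubic (e0 *m M) -> fwd M.
Proof.
move=> h1 h2 v [[t [d [hd ->]]]|[d [hd ->]]]; rewrite -scalemxAl; apply: sp_scale => //.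
exact: h1.
Qed.

Lemma fwd_inGq M N : M *m N = 1%:M -> fwd M -> fwd N -> in_Gq M.
Proof.
move=> hMN hM hN; split; first by case: (mulmx1_unit hMN).
move=> v hv; split; first exact: hM.
by move/hN; rewrite -mulmxA hMN mulmx1.
Qed.

Lemma fwdD l : l != 0 -> fwd (D l).
Proof.
move=> hl; apply: fwdP => [t|].
  left; exists (l * t); exists 1; split; first exact: oner_neq0.
  rewrite scale1r /pt mul4; apply/rowP => j; rewrite !mxE; case: j => [[|[|[|[|j]]]] Hj] //=; rewrite ?mxE /=; ring.
right; exists (l ^+ 3); split; first by rewrite expf_neq0.
rewrite /e0 mul4; apply/rowP => j; rewrite !mxE; case: j => [[|[|[|[|j]]]] Hj] //=; rewrite ?mxE /=; ring.
Qed.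

Lemma fwdS : fwd Sw.
Proof.
apply: fwdP => [t|].
  have [->|ht] := eqVneq t 0.
    right; exists 1; split; first exact: oner_neq0.
    rewrite scale1r /pt mul4; apply/rowP => j; rewrite !mxE; case: j => [[|[|[|[|j]]]] Hj] //=; rewrite ?mxE /=; ring.
  left; exists t^-1; exists (t ^+ 3); split; first by rewrite expf_neq0.
  rewrite /pt mul4; apply/rowP => j; rewrite !mxE; case: j => [[|[|[|[|j]]]] Hj] //=; rewrite ?mxE /=; by field.
left; exists 0; exists 1; split; first exact: oner_neq0.
rewrite scale1r /e0 mul4; apply/rowP => j; rewrite !mxE; case: j => [[|[|[|[|j]]]] Hj] //=; rewrite ?mxE /=; ring.
Qed.

Lemma fwdT c : fwd (T c).
Proof.
apply: fwdP => [t|].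
  left; exists (t + c); exists 1; split; first exact: oner_neq0.
  rewrite scale1r /pt mul4; apply/rowP => j; rewrite !mxE; case: j => [[|[|[|[|j]]]] Hj] //=; rewrite ?mxE /=; ring.
right; exists 1; split; first exact: oner_neq0.
rewrite scale1r /e0 mul4; apply/rowP => j; rewrite !mxE; case: j => [[|[|[|[|j]]]] Hj] //=; rewrite ?mxE /=; ring.
Qed.

Lemma GD l : l != 0 -> in_Gq (D l).
Proof. move=> hl; apply: (fwd_inGq _ _ (DD l hl) (fwdD l hl)); apply: fwdD; by rewrite invr_eq0. Qed.
Lemma GS : in_Gq Sw.
Proof. exact: (fwd_inGq _ _ SS fwdS fwdS). Qed.
Lemma GT c : in_Gq (T c).
Proof. exact: (fwd_inGq _ _ (TT c) (fwdT c) (fwdT (- c))). Qed.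

Lemma Gmul (M N : 'M[F]_4) : in_Gq M -> in_Gq N -> in_Gq (M *m N).
Proof.
move=> [uM hM] [uN hN]; split; first by rewrite unitmx_mul uM uN.
move=> v hv; rewrite mulmxA; apply: iff_trans (hM v hv) _; apply: hN.
apply: contra hv => /eqP h; apply/eqP.
by rewrite -(mulmxK uM v) h mul0mx.
Qed.

Lemma Ginv (M : 'M[F]_4) : in_Gq M -> in_Gq (invmx M).
Proof.
move=> [uM hM]; split; first by rewrite unitmx_inv.
move=> v hv; have hw : v *m invmx M != 0.
  apply: contra hv => /eqP h; apply/eqP; by rewrite -(mulmxKV uM v) h mul0mx.
by have := hM _ hw; rewrite mulmxKV // => H; split => /H.
Qed.
End S.

Lemma reach (F : fieldType) (h3 : (3 : F) = 0) (u : 'rV[F]_4) :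
  on_axis u -> exists M, in_Gq M /\ same_point (u *m M) (coord4 0 1 1 0).
Proof.
have h2 : (2 : F) = -1.
  by apply: (addIr 1); rewrite addNr -h3; ring.
case=> hu0 [hu1 hu3].
rewrite (rowE4 _ u) hu1 hu3 in hu0 *.
set a := u 0 1; set b := u 0 2.
have [a0|ha] := eqVneq a 0.
  have [b0|hb] := eqVneq b 0.
    by move: hu0; rewrite a0 b0; case/eqP; apply/rowP => j; rewrite !mxE; case: j => [[|[|[|[|j]]]] Hj].
  exists (T F 1 *m D F (-1)); split; first by apply: Gmul; [apply: GT | apply: GD; rewrite oppr_eq0 oner_neq0].
  exists (- b); split; first by rewrite oppr_eq0.
  rewrite mulmxA mul4 mul4 a0; apply/rowP => j; rewrite !mxE; case: j => [[|[|[|[|j]]]] Hj] //=; rewrite ?mxE /= ?h3 ?h2; ring.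
have [b0|hb] := eqVneq b 0.
  exists (Sw F *m T F 1 *m D F (-1)); split.
    by apply: Gmul; [apply: Gmul; [apply: GS | apply: GT] | apply: GD; rewrite oppr_eq0 oner_neq0].
  exists (- a); split; first by rewrite oppr_eq0.
  rewrite !mulmxA mul4 mul4 mul4 b0; apply/rowP => j; rewrite !mxE; case: j => [[|[|[|[|j]]]] Hj] //=; rewrite ?mxE /= ?h3 ?h2; ring.
exists (D F (b / a)); split; first by apply: GD; rewrite mulf_neq0 ?invr_eq0.
exists (b ^+ 2 / a); split; first by rewrite mulf_neq0 ?invr_eq0 ?expf_neq0.
rewrite mul4; apply/rowP => j; rewrite !mxE; case: j => [[|[|[|[|j]]]] Hj] //=; rewrite ?mxE /=; by field.
Qed.

Lemma char3 (F : finFieldType) : (#|F| %% 3 = 0)%N -> (3 : F) = 0.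
Proof.
move=> h.
have [p pr_p pc] := finPcharP F.
have hc := card_pprimeChar pc.
have h3 : (3 %| p ^ logn p #|pPrimeCharType pc|)%N by rewrite -hc; apply/dvdnP; exists (#|F| %/ 3)%N; rewrite {1}(divn_eq #|F| 3) h addn0.
move: h3; rewrite Euclid_dvdX // => /andP[+ _].
rewrite dvdn_prime2 // => /eqP E; rewrite E; exact: pcharf0 pc.
Qed.

Theorem proposition7p1 (q : nat) (F : finFieldType) (hF : #|F| = q)
  (hq3 : (q %% 3 = 0)%N) (hq9 : (9 <= q)%N) :
  forall u v : 'rV[F]_4, on_axis u -> on_axis v ->
    exists M : 'M[F]_4, in_Gq M /\ same_point (u *m M) v.
Proof.
move=> u v hu hv.
have h3 : (3 : F) = 0 by apply: char3; rewrite hF.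
have [M1 [G1 [d [hd e1]]]] := reach _ h3 _ hu.
have [M2 [G2 [c [hc e2]]]] := reach _ h3 _ hv.
exists (M1 *m invmx M2); split; first by apply: Gmul => //; apply: Ginv.
have uM2 : M2 \in unitmx by case: G2.
exists (d / c); split; first by rewrite mulf_neq0 ?invr_eq0.
have eg : coord4 (F:=F) 0 1 1 0 *m invmx M2 = c^-1 *: v.
  by rewrite -[in RHS](mulmxK uM2 v) e2 -scalemxAl scalerA mulVf // scale1r.
by rewrite mulmxA e1 -scalemxAl eg scalerA.
Qed.
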